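(* Let $\mathcal{M}\subset\mathbb{R}^d$ be a set of $n$ distinct points with the Euclidean metric, $k$ an integer with $2\le k<n$, and $0<\epsilon<\tfrac12$. Let $\epsilon_1=\frac{\epsilon}{3+2\epsilon}$. Let $P_1$ be the output of the farthest-point-insertion procedure on $(\mathcal{M},k)$ (choose $q_1,q_2\in\mathcal{M}$ realizing $\operatorname{diam}(\mathcal{M})$, set $S_2=\{q_1,q_2\}$, and for $i=2,\dots,k-1$ add a point of $\mathcal{M}$ maximizing $\delta(\cdot,S_i)$), and let $\epsilon_2=\frac{\epsilon_1R_{P_1}}{2\sqrt d}$. Partition $\mathbb{R}^d$ by an axis-parallel grid of cubic cells of side length $\epsilon_2$, and let $\mathcal{C}\subset\mathcal{M}$ contain exactly one (arbitrarily chosen) point of $\mathcal{M}$ from each cell that intersects $\mathcal{M}$. Let $P\subset\mathcal{C}$ be a $k$-point subset of $\mathcal{C}$ minimizing $GR_P$ (gap ratio with respect to $\mathcal{M}$) among all $k$-subsets of $\mathcal{C}$. Then $GR_P\le(1+\epsilon)\,GR_{OPT}$, where $GR_{OPT}=\min\{GR_{P'}:P'\subset\mathcal{M},\ |P'|=k\}$.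
   Context: For a finite set $S\subset\mathcal{M}$ with $|S|\ge2$: $\delta(x,S)=\min_{s\in S}\|x-s\|$, $R_S=\max_{x\in\mathcal{M}}\delta(x,S)$, $r_S=\min_{p,q\in S,\,p\ne q}\|p-q\|/2$, and the gap ratio is $GR_S=R_S/r_S$ (all with respect to the whole set $\mathcal{M}$). *)

(* Defs.v *)
From mathcomp Require Import all_boot all_order all_algebra.
From mathcomp Require Import reals.
Set Implicit Arguments. Unset Strict Implicit. Unset Printing Implicit Defensive.
Import Order.TTheory GRing.Theory Num.Theory.
Local Open Scope ring_scope.

Section GapRatio.
Variables (R : realType) (d : nat).
Local Notation pt := 'rV[R]_d.

Definition edist (x y : pt) : R := Num.sqrt (\sum_(i < d) (x 0 i - y 0 i) ^+ 2).

Definition delta (x : pt) (S : seq pt) : R :=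
  \big[Order.min/edist x (head x S)]_(s <- S) edist x s.

Definition RS (M S : seq pt) : R := \big[Order.max/0]_(x <- M) delta x S.

(* r_S = min_{p,q in S, p <> q} ||p - q|| / 2  (S has >= 2 distinct points;
   the seed of the fold is the distance of the first two points of S) *)
Definition rS (S : seq pt) : R :=
  (\big[Order.min/edist (nth 0 S 0) (nth 0 S 1)]_(p <- S)
     \big[Order.min/edist (nth 0 S 0) (nth 0 S 1)]_(q <- S | p != q) edist p q) / 2.

Definition GR (M S : seq pt) : R := RS M S / rS S.

Definition diam (M : seq pt) : R :=
  \big[Order.max/0]_(p <- M) \big[Order.max/0]_(q <- M) edist p q.

(* P1 is a possible output of farthest-point insertion on (M,k):
   P1 = [q_1; ...; q_k] with q_1,q_2 in M realizing diam M, and each further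
   q_{i+1} (i = 2..k-1) a point of M maximizing delta(., S_i), S_i = first i points. *)
Definition fpi_output (M : seq pt) (k : nat) (P1 : seq pt) : Prop :=
  [/\ size P1 = k, {subset P1 <= M},
      edist (nth 0 P1 0) (nth 0 P1 1) = diam M &
      forall i, (2 <= i < k)%N ->
        forall x, x \in M -> delta x (take i P1) <= delta (nth 0 P1 i) (take i P1)].

Definition cell (e : R) (o : pt) (x : pt) : 'I_d -> int :=
  fun i => Num.floor ((x 0 i - o 0 i) / e).

Definition grid_reps (e : R) (o : pt) (M C : seq pt) : Prop :=
  [/\ {subset C <= M},
      forall x, x \in M -> exists2 c, c \in C & cell e o c =1 cell e o x &
      forall c c', c \in C -> c' \in C -> cell e o c =1 cell e o c' -> c = c'].

End GapRatio.

(* Main.v *)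
Require Import Defs.
From mathcomp Require Import all_boot all_order all_algebra.
From mathcomp Require Import reals.
From mathcomp Require Import ring lra zify.
Import Order.TTheory GRing.Theory Num.Theory.
Local Open Scope ring_scope.

Set Implicit Arguments.
Section Metric.
Variables (R : realType) (d : nat).
Local Notation pt := 'rV[R]_d.

Lemma edist_ge0 (x y : pt) : 0 <= edist x y.
Proof. exact: sqrtr_ge0. Qed.

Lemma edistC (x y : pt) : edist x y = edist y x.
Proof. by rewrite /edist; congr Num.sqrt; apply: eq_bigr => i _; rewrite -sqrrN opprB. Qed.

Lemma edistxx (x : pt) : edist x x = 0.
Proof. by rewrite /edist big1 ?sqrtr0 // => i _; rewrite subrr expr0n. Qed.

Lemma edist_eq0 (x y : pt) : edist x y = 0 -> x = y.
Proof.
move/eqP; rewrite sqrtr_eq0 => H.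
have H0 : \sum_(i < d) (x 0 i - y 0 i) ^+ 2 = 0.
  by apply/eqP; rewrite eq_le H sumr_ge0 // => i _; rewrite sqr_ge0.
apply/rowP => i; move/psumr_eq0P: H0 => /(_ (fun j _ => sqr_ge0 _) i isT).
by move/eqP; rewrite sqrf_eq0 subr_eq0 => /eqP.
Qed.

Lemma cs (a b : 'I_d -> R) :
  \sum_i a i * b i <= Num.sqrt (\sum_i a i ^+ 2) * Num.sqrt (\sum_i b i ^+ 2).
Proof.
set A := \sum_i a i ^+ 2; set B := \sum_i b i ^+ 2.
have A0 : 0 <= A by rewrite sumr_ge0 // => i _; rewrite sqr_ge0.
have B0 : 0 <= B by rewrite sumr_ge0 // => i _; rewrite sqr_ge0.
have [sA0|sApos] := eqVneq (Num.sqrt A) 0.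
  have : A = 0 by apply/eqP; rewrite eq_le A0 -sqrtr_eq0 sA0 eqxx.
  move/psumr_eq0P => /(_ (fun j _ => sqr_ge0 _)) H; rewrite sA0 mul0r big1 // => i _.
  by have /eqP := H i isT; rewrite sqrf_eq0 => /eqP ->; rewrite mul0r.
have [sB0|sBpos] := eqVneq (Num.sqrt B) 0.
  have : B = 0 by apply/eqP; rewrite eq_le B0 -sqrtr_eq0 sB0 eqxx.
  move/psumr_eq0P => /(_ (fun j _ => sqr_ge0 _)) H; rewrite sB0 mulr0 big1 // => i _.
  by have /eqP := H i isT; rewrite sqrf_eq0 => /eqP ->; rewrite mulr0.
set sA := Num.sqrt A in sApos *; set sB := Num.sqrt B in sBpos *.
have sAp : 0 < sA by rewrite lt_def sApos sqrtr_ge0.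
have sBp : 0 < sB by rewrite lt_def sBpos sqrtr_ge0.
have hA : sA ^+ 2 = A by rewrite sqr_sqrtr.
have hB : sB ^+ 2 = B by rewrite sqr_sqrtr.
have H : 0 <= \sum_i (a i * sB - b i * sA) ^+ 2 by rewrite sumr_ge0 // => i _; rewrite sqr_ge0.
have E : \sum_i (a i * sB - b i * sA) ^+ 2 =
   A * sB ^+ 2 + B * sA ^+ 2 - 2 * sA * sB * \sum_i a i * b i.
  rewrite (eq_bigr (fun i => a i ^+ 2 * sB ^+ 2 + b i ^+ 2 * sA ^+ 2 - 2 * sA * sB * (a i * b i))); last by move=> i _; ring.
  by rewrite sumrB big_split /= -!mulr_suml -mulr_sumr.
rewrite E hA hB in H.
have : sA * sB * (\sum_i a i * b i) <= sA * sB * (sA * sB).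
  rewrite -hA -hB in H; nra.
by rewrite ler_pM2l ?mulr_gt0.
Qed.

Lemma edist_triangle (x y z : pt) : edist x z <= edist x y + edist y z.
Proof.
rewrite /edist.
set a := fun i => x 0 i - y 0 i; set b := fun i => y 0 i - z 0 i.
have -> : \sum_(i < d) (x 0 i - z 0 i) ^+ 2 = \sum_i (a i + b i) ^+ 2.
  by apply: eq_bigr => i _; rewrite /a /b subrKA.
have := cs a b.
set A := \sum_i a i ^+ 2; set B := \sum_i b i ^+ 2.
have A0 : 0 <= A by rewrite sumr_ge0 // => i _; rewrite sqr_ge0.
have B0 : 0 <= B by rewrite sumr_ge0 // => i _; rewrite sqr_ge0.
move=> Hcs.
have hA := sqr_sqrtr A0; have hB := sqr_sqrtr B0.
have gA := sqrtr_ge0 A; have gB := sqrtr_ge0 B.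
rewrite -(ger0_norm (addr_ge0 gA gB)) -sqrtr_sqr ler_sqrt ?sqr_ge0 //.
have -> : \sum_i (a i + b i) ^+ 2 = A + B + 2 * \sum_i a i * b i.
  rewrite (eq_bigr (fun i => a i ^+ 2 + b i ^+ 2 + 2 * (a i * b i))); last by move=> i _; ring.
  by rewrite !big_split /= -mulr_sumr.
rewrite sqrrD hA hB; nra.
Qed.


Lemma delta_le (x : pt) S s : s \in S -> delta x S <= edist x s.
Proof. by move=> sS; rewrite /delta; exact: (@ge_bigmin_seq _ _ _ _ _ _ xpredT _ sS). Qed.

Lemma delta_ge (x : pt) S c : S != [::] -> (forall s, s \in S -> c <= edist x s) ->
  c <= delta x S.
Proof.
case: S => // h t _ H; rewrite /delta big_seq_cond; apply: le_bigmin => //=.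
  by apply: H; rewrite mem_head.
by move=> i /andP[iS _]; apply: H.
Qed.

Lemma delta_attain (x : pt) S : S != [::] -> exists2 s, s \in S & delta x S = edist x s.
Proof.
case: S => // h t _.
pose P v := exists2 s, s \in h :: t & v = edist x s.
suff : P (delta x (h :: t)) by [].
rewrite /delta big_seq_cond; apply: (big_ind P) => /=.
- by exists h; rewrite ?mem_head.
- move=> a b [s1 H1 ->] [s2 H2 ->]; rewrite minEle; case: ifP => _.
  + by exists s1.
  + by exists s2.
- by move=> i /andP[iS _]; exists i.
Qed.

Lemma delta_ge0 (x : pt) S : 0 <= delta x S.
Proof.
rewrite /delta; elim/big_ind: _ => //; first exact: edist_ge0.
  by move=> a b ha hb; rewrite le_min ha hb.
by move=> i _; exact: edist_ge0.
Qed.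

Lemma RS_ge (M S : seq pt) x : x \in M -> delta x S <= RS M S.
Proof. by move=> xM; rewrite /RS; exact: (@le_bigmax_seq _ _ _ _ _ _ xpredT _ xM). Qed.

Lemma RS_le (M S : seq pt) c : 0 <= c -> (forall x, x \in M -> delta x S <= c) ->
  RS M S <= c.
Proof. by move=> c0 H; rewrite /RS big_seq_cond; apply: bigmax_le => // x /andP[xM _]; apply: H. Qed.

Lemma RS_ge0 (M S : seq pt) : 0 <= RS M S.
Proof. exact: bigmax_ge_id. Qed.

Lemma rS_le (S : seq pt) p q : p \in S -> q \in S -> p != q -> 2 * rS S <= edist p q.
Proof.
move=> pS qS pq; rewrite /rS mulrC divfK ?pnatr_eq0 //.
apply: le_trans (@ge_bigmin_seq _ _ _ _ _ _ xpredT _ pS erefl) _.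
exact: (@ge_bigmin_seq _ _ _ _ _ _ (fun q => p != q) (edist p) qS pq).
Qed.

Lemma rS_ge (S : seq pt) c : c <= edist (nth 0 S 0) (nth 0 S 1) ->
  (forall p q, p \in S -> q \in S -> p != q -> c <= edist p q) -> c <= 2 * rS S.
Proof.
move=> c0 H; rewrite /rS mulrC divfK ?pnatr_eq0 //.
rewrite big_seq_cond; apply: le_bigmin => // p /andP[pS _].
rewrite big_seq_cond; apply: le_bigmin => // q /andP[qS pq].
exact: H.
Qed.

Lemma rS_gt0 (S : seq pt) : uniq S -> (2 <= size S)%N -> 0 < rS S.
Proof.
move=> uS sS; rewrite /rS divr_gt0 //.
have n01 : nth 0 S 0 != nth 0 S 1 by rewrite nth_uniq // (ltn_trans _ sS).
have pos : forall p q : pt, p != q -> 0 < edist p q.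
  by move=> p q pq; rewrite lt_def edist_ge0 andbT; apply/eqP => /edist_eq0/eqP; apply/negP.
elim/big_ind: _ => //; first exact: pos.
  by move=> a b ha hb; rewrite lt_min ha hb.
move=> p _; elim/big_ind: _ => //; first exact: pos.
  by move=> a b ha hb; rewrite lt_min ha hb.
by move=> q; exact: pos.
Qed.

Lemma nth_pair_dist (Q Q' : seq pt) t i j :
  size Q' = size Q ->
  (forall i, (i < size Q)%N -> edist (nth 0 Q i) (nth 0 Q' i) <= t) ->
  uniq Q -> (i < size Q)%N -> (j < size Q)%N -> i != j ->
  2 * rS Q - 2 * t <= edist (nth 0 Q' i) (nth 0 Q' j).
Proof.
move=> sz H uQ ilt jlt ij.
have h1 : 2 * rS Q <= edist (nth 0 Q i) (nth 0 Q j).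
  by apply: rS_le; rewrite ?mem_nth ?nth_uniq.
have t1 := edist_triangle (nth 0 Q i) (nth 0 Q' i) (nth 0 Q j).
have t2 := edist_triangle (nth 0 Q' i) (nth 0 Q' j) (nth 0 Q j).
have e1 := H i ilt; have e2 := H j jlt.
rewrite (edistC (nth 0 Q' j)) in t2.
lra.
Qed.

Lemma perturb (M Q Q' : seq pt) t :
  size Q' = size Q ->
  (forall i, (i < size Q)%N -> edist (nth 0 Q i) (nth 0 Q' i) <= t) ->
  uniq Q -> (2 <= size Q)%N -> t < rS Q ->
  [/\ uniq Q', RS M Q' <= RS M Q + t & rS Q - t <= rS Q'].
Proof.
move=> sz H uQ s2 trS.
have t0 : 0 <= t by apply: le_trans (H 0%N (ltn_trans _ s2)); rewrite ?edist_ge0.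
have pd := fun i j => @nth_pair_dist Q Q' t i j sz H uQ.
split.
- apply/(uniqP 0) => i j; rewrite !inE sz => ilt jlt eq; apply/eqP/negPn/negP => ij.
  have := pd _ _ ilt jlt ij; rewrite eq edistxx.
  have := @rS_gt0 Q uQ s2; lra.
- apply: RS_le; first by rewrite addr_ge0 ?RS_ge0.
  move=> x xM.
  have Qn : Q != [::] by case: Q s2 {H sz uQ trS pd}.
  have [s sQ ds] := @delta_attain x Q Qn.
  have ilt : (index s Q < size Q)%N by rewrite index_mem.
  have e1 := H _ ilt; rewrite nth_index // in e1.
  have : delta x Q' <= edist x (nth 0 Q' (index s Q)).
    by apply: delta_le; rewrite mem_nth // sz.
  have := edist_triangle x s (nth 0 Q' (index s Q)).
  have := @RS_ge M Q x xM.
  rewrite -ds; lra.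
- suff : 2 * rS Q - 2 * t <= 2 * rS Q' by lra.
  apply: rS_ge.
  + apply: pd => //; exact: (ltn_trans _ s2).
  + move=> p q pQ qQ pq.
    rewrite -(nth_index 0 pQ) -(nth_index 0 qQ).
    apply: pd; rewrite -?sz ?index_mem //.
    by apply: contra pq => /eqP e; rewrite -(nth_index 0 pQ) -(nth_index 0 qQ) e.
Qed.
Lemma cell_close e (o x c : pt) : 0 < e -> cell e o c =1 cell e o x ->
  edist c x <= Num.sqrt (d%:R) * e.
Proof.
move=> e0 hc; rewrite /edist.
have H : forall i, (c 0 i - x 0 i) ^+ 2 <= e ^+ 2.
  move=> i; have := hc i; rewrite /cell => hf.
  set a := (c 0 i - o 0 i) / e in hf; set b := (x 0 i - o 0 i) / e in hf.
  have la := floor_le a; have ua := floorD1_gt a.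
  have lb := floor_le b; have ub := floorD1_gt b.
  rewrite hf in la ua.
  set m := Num.floor b in la ua lb ub.
  rewrite intrD in ua ub.
  have ea : a * e = c 0 i - o 0 i by rewrite /a divfK // gt_eqF.
  have eb : b * e = x 0 i - o 0 i by rewrite /b divfK // gt_eqF.
  have : a - b < 1 by lra.
  have : b - a < 1 by lra.
  move=> h1 h2.
  have E : c 0 i - x 0 i = (a - b) * e by rewrite mulrBl ea eb; ring.
  have h3 : (a - b) ^+ 2 <= 1 by nra.
  rewrite E exprMn -[X in _ <= X]mul1r; apply: ler_wpM2r => //; exact: sqr_ge0.
apply: le_trans (ler_wsqrtr (ler_sum _ (fun i _ => H i))) _.
by rewrite sumr_const card_ord -[e ^+ 2 *+ d]mulr_natl sqrtrM ?ler0n // sqrtr_sqr gtr0_norm.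
Qed.
Lemma reps_exist (e : R) (o : pt) (M C Q : seq pt) : grid_reps e o M C -> {subset Q <= M} ->
  exists Q' : seq pt, [/\ size Q' = size Q, {subset Q' <= C} &
    forall i, (i < size Q)%N -> cell e o (nth 0 Q' i) =1 cell e o (nth 0 Q i)].
Proof.
case=> _ hex _; elim: Q => [|q Q IH] sub.
  by exists [::]; split.
have [Q' [s1 s2 s3]] : exists Q' : seq pt, [/\ size Q' = size Q, {subset Q' <= C} &
    forall i, (i < size Q)%N -> cell e o (nth 0 Q' i) =1 cell e o (nth 0 Q i)].
  by apply: IH => y yQ; apply: sub; rewrite inE yQ orbT.
have [c cC hc] := hex q (sub q (mem_head _ _)).
exists (c :: Q'); split => /=; first by rewrite s1.
  by move=> y; rewrite inE => /predU1P[->|/s2].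
by case=> [|i] //= /s3.
Qed.

Lemma fpi_pair (M : seq pt) k (P1 : seq pt) (x : pt) i j : fpi_output M k P1 -> x \in M -> (i < k)%N -> (j < k)%N ->
  i != j -> delta x P1 <= edist (nth 0 P1 i) (nth 0 P1 j).
Proof.
case=> sz sub hd hins xM.
wlog ij : i j / (i < j)%N.
  move=> W ik jk nij; case: (ltngtP i j) => [h|h|h]; first exact: W.
    by rewrite edistC; apply: W; rewrite // eq_sym.
  by rewrite h eqxx in nij.
move=> ik jk _.
have P1n : P1 != [::] by apply/eqP => E; rewrite E /= in sz; rewrite -sz in ik.
case: (leqP 2 j) => j2.
  have hj := hins j (andb_true_intro (conj j2 jk)) x xM.
  have stk : size (take j P1) = j by rewrite size_takel // sz ltnW.
  have h1 : delta x P1 <= delta x (take j P1).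
    apply: delta_ge; first by rewrite -size_eq0 stk -lt0n; case: j ij {hj stk jk j2}.
    by move=> s /mem_take sP; apply: delta_le.
  have h2 : delta (nth 0 P1 j) (take j P1) <= edist (nth 0 P1 j) (nth 0 P1 i).
    by apply: delta_le; rewrite -(nth_take 0 ij) mem_nth // stk.
  by rewrite edistC; apply: le_trans h2; apply: le_trans hj.
have [j1 i0] : j = 1%N /\ i = 0%N by split; lia.
subst; rewrite hd.
have P0 : nth 0 P1 0 \in P1 by rewrite mem_nth // sz; lia.
apply: le_trans (@delta_le x P1 _ P0) _.
rewrite /diam.
apply: le_trans (@le_bigmax_seq _ _ _ _ _ _ xpredT _ xM erefl).
have P0M : nth 0 P1 0 \in M by apply: sub; rewrite mem_nth // sz.
exact: (@le_bigmax_seq _ _ _ _ _ _ xpredT (edist x) P0M erefl).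
Qed.
Lemma fpi_R1 (M : seq pt) k (P1 : seq pt) i j : fpi_output M k P1 -> (i < k)%N -> (j < k)%N ->
  i != j -> RS M P1 <= edist (nth 0 P1 i) (nth 0 P1 j).
Proof.
move=> F ik jk ij; apply: RS_le; first exact: edist_ge0.
by move=> x xM; exact: (@fpi_pair M k P1 x i j F xM ik jk ij).
Qed.

Lemma fpi_2approx (M : seq pt) k (P1 Q : seq pt) : fpi_output M k P1 -> (2 <= k)%N ->
  size Q = k -> RS M P1 <= 2 * RS M Q.
Proof.
move=> F k2 sQ; have F' := F; case: F' => sz sub _ _.
apply: RS_le; first by rewrite mulr_ge0 ?RS_ge0.
move=> x xM; set D := delta x P1; set Y := x :: P1.
have YM : forall a, (a < k.+1)%N -> nth 0 Y a \in M.
  by case=> [|a] //= ak; apply: sub; rewrite mem_nth // sz.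
have DY : forall a b, (a < k.+1)%N -> (b < k.+1)%N -> a != b -> D <= edist (nth 0 Y a) (nth 0 Y b).
  case=> [|a] [|b] //= ak bk ab.
  - by apply: delta_le; rewrite mem_nth // sz.
  - by rewrite edistC; apply: delta_le; rewrite mem_nth // sz.
  - exact: (@fpi_pair M k P1 x a b F xM ak bk ab).
have Qn : Q != [::] by apply/eqP => E; rewrite E in sQ; rewrite -sQ in k2.
have ex : forall a : 'I_k.+1, exists j : 'I_k,
    delta (nth 0 Y a) Q = edist (nth 0 Y a) (nth 0 Q j).
  move=> a; have [s sQ' ds] := @delta_attain (nth 0 Y a) Q Qn.
  have il : (index s Q < k)%N by rewrite -sQ index_mem.
  by exists (Ordinal il); rewrite /= nth_index.
have [f hf] := fin_all_exists ex.
have : ~~ injectiveb f.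
  apply/negP => /injectiveP inj; have := leq_card f inj; rewrite !card_ord; lia.
case/injectivePn => a [b ab fab].
have ab' : (a : nat) != b by [].
have := DY a b (ltn_ord a) (ltn_ord b) ab'.
have := edist_triangle (nth 0 Y a) (nth 0 Q (f a)) (nth 0 Y b).
have := hf a; have := hf b; rewrite -fab => hb ha.
have := @RS_ge M Q _ (YM a (ltn_ord a)); have := @RS_ge M Q _ (YM b (ltn_ord b)).
rewrite ha hb (edistC (nth 0 Q (f a))); lra.
Qed.

Lemma fpi_pos (M : seq pt) n k (P1 : seq pt) : uniq M -> size M = n -> (2 <= k)%N -> (k < n)%N ->
  fpi_output M k P1 -> 0 < RS M P1.
Proof.
move=> uM sM k2 kn [sz sub _ _].
have : ~~ all (mem P1) M.
  apply/negP => /allP hs; have := uniq_leq_size uM hs; rewrite sM sz; lia.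
case/allPn => x xM xP.
have Pn : P1 != [::] by apply/eqP => E; rewrite E in sz; rewrite -sz in k2.
have [s sP ds] := @delta_attain x P1 Pn.
apply: lt_le_trans (@RS_ge M P1 x xM); rewrite ds lt_def edist_ge0 andbT.
apply/negP => /eqP/edist_eq0 E; move: xP; rewrite E => /negP; apply; exact: sP.
Qed.

Lemma fpi_uniq (M : seq pt) n k (P1 : seq pt) : uniq M -> size M = n -> (2 <= k)%N -> (k < n)%N ->
  fpi_output M k P1 -> uniq P1.
Proof.
move=> uM sM k2 kn F; have pos := fpi_pos uM sM k2 kn F.
have F' := F; case: F' => sz _ _ _.
apply/(uniqP 0) => i j; rewrite !inE sz => ik jk E; apply/eqP/negPn/negP => ij.
by have := @fpi_R1 M k P1 i j F ik jk ij; rewrite E edistxx; lra.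
Qed.

Lemma fpi_rS (M : seq pt) n k (P1 : seq pt) : uniq M -> size M = n -> (2 <= k)%N -> (k < n)%N ->
  fpi_output M k P1 -> RS M P1 <= 2 * rS P1.
Proof.
move=> uM sM k2 kn F; have uP := fpi_uniq uM sM k2 kn F.
have F' := F; case: F' => sz _ _ _.
apply: rS_ge; first by apply: (@fpi_R1 M k P1 0 1 F); lia.
move=> p q pP qP pq; rewrite -(nth_index 0 pP) -(nth_index 0 qP).
apply: (@fpi_R1 M k P1 _ _ F); rewrite -?sz ?index_mem //.
by apply: contra pq => /eqP e; rewrite -(nth_index 0 pP) -(nth_index 0 qP) e.
Qed.
End Metric.
Unset Implicit Arguments.

Lemma final_arith (R : realType) (eps e1 RQ rQ R' r' t : R) :
  0 < eps -> 0 < e1 -> e1 * (3 + 2 * eps) = eps -> 0 < rQ -> 0 <= RQ -> RQ <= 2 * rQ ->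
  0 <= t -> t <= e1 * RQ -> 0 < rQ - t -> rQ - t <= r' -> 0 <= R' -> R' <= RQ + t ->
  R' / r' <= (1 + eps) * (RQ / rQ).
Proof.
move=> ep e1p e1e rQp RQ0 RQr t0 tle rt rr R0 RR.
have r'p : 0 < r' by lra.
rewrite ler_pdivrMr //.
set G := RQ / rQ.
have eRQ : RQ = G * rQ by rewrite /G divfK // gt_eqF.
have G0 : 0 <= G by rewrite /G divr_ge0 // ltW.
have G2 : G <= 2 by rewrite /G ler_pdivrMr // mulrC.
rewrite eRQ in RQ0 RQr tle RR *.
have h2 : (1 + eps) * G * (rQ - t) <= (1 + eps) * G * r' by rewrite ler_wpM2l // mulr_ge0 // addr_ge0 // ltW.
suff h3 : (G * rQ + t) <= (1 + eps) * G * (rQ - t) by lra.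
have h6 : t * ((1 + eps) * G + 1) <= e1 * G * rQ * ((1 + eps) * G + 1).
  have X0 : 0 <= (1 + eps) * G by rewrite mulr_ge0 // addr_ge0 // ltW.
  apply: ler_wpM2r => //; lra.
have h7 : G * ((1 + eps) * G + 1) <= G * ((1 + eps) * 2 + 1).
  apply: ler_wpM2l => //; rewrite lerD2r; apply: ler_wpM2l => //; lra.
have h8 : 0 <= e1 * rQ by rewrite mulr_ge0 // ltW.
nra.
Qed.

Theorem theorem9 (R : realType) (d n k : nat) (M : seq 'rV[R]_d) (eps : R)
    (P1 : seq 'rV[R]_d) (o : 'rV[R]_d) (C P : seq 'rV[R]_d) :
  uniq M -> size M = n ->
  (2 <= k)%N -> (k < n)%N ->
  0 < eps -> eps < 1 / 2 ->
  fpi_output M k P1 ->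
  let eps1 := eps / (3 + 2 * eps) in
  let eps2 := eps1 * RS M P1 / (2 * Num.sqrt (d%:R)) in
  grid_reps eps2 o M C ->
  uniq P -> size P = k -> {subset P <= C} ->
  (forall P' : seq 'rV[R]_d, uniq P' -> size P' = k -> {subset P' <= C} ->
     GR M P <= GR M P') ->
  forall Q : seq 'rV[R]_d, uniq Q -> size Q = k -> {subset Q <= M} ->
    GR M P <= (1 + eps) * GR M Q.
Proof.
move=> uM sM k2 kn e0 e12 F eps1 eps2 Gr uP sP PC Popt Q uQ sQ QM.
have R1p : 0 < RS M P1 := fpi_pos uM sM k2 kn F.
have F' := F; case: F' => sz1 sub1 _ _.
have d0 : (0 < d)%N.
  case: (posnP d) => // d0'; exfalso.
  have : RS M P1 <= 0.
    apply: RS_le => // x _.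
    have P0 : nth 0 P1 0 \in P1 by rewrite mem_nth // sz1; lia.
    apply: le_trans (@delta_le R d x P1 _ P0) _.
    rewrite /edist big1 ?sqrtr0 // => -[i hi]; exfalso; move: hi; by rewrite d0'.
  lra.
have sd : 0 < Num.sqrt (d%:R : R) by rewrite sqrtr_gt0 ltr0n.
have e3 : 0 < 3 + 2 * eps by lra.
have e1p : 0 < eps1 by rewrite /eps1; apply: divr_gt0.
have e1e : eps1 * (3 + 2 * eps) = eps by rewrite /eps1 divfK // gt_eqF.
have e1s : eps1 < 1 / 6 by nra.
have e2p : 0 < eps2 by rewrite /eps2; apply: divr_gt0; apply: mulr_gt0.
set t := eps1 * RS M P1 / 2.
have e2d : Num.sqrt (d%:R) * eps2 = t.
  by rewrite /eps2 /t; field; rewrite gt_eqF.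
have key : forall Q : seq 'rV[R]_d, uniq Q -> size Q = k -> {subset Q <= M} ->
    RS M Q <= 2 * rS Q -> GR M P <= (1 + eps) * GR M Q.
  move=> {}Q {}uQ {}sQ {}QM hQ.
  have [Q' [s1 s2 s3]] := reps_exist Gr QM.
  have close : forall i, (i < size Q)%N -> edist (nth 0 Q i) (nth 0 Q' i) <= t.
    by move=> i iQ; rewrite edistC -e2d; apply: cell_close => //; apply: s3.
  have rQp : 0 < rS Q by apply: rS_gt0; rewrite ?sQ.
  have h2 := @fpi_2approx R d M k P1 Q F k2 sQ.
  have t0 : 0 <= t by rewrite /t divr_ge0 // mulr_ge0 // ltW.
  have tle : t <= eps1 * RS M Q by rewrite /t; nra.
  have trS : t < rS Q by nra.
  have [uQ' hR hr] := @perturb R d M Q Q' t s1 close uQ (ltac:(by rewrite sQ)) trS.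
  apply: le_trans (Popt Q' uQ' (etrans s1 sQ) s2) _.
  rewrite /GR; apply: (final_arith R eps eps1 (RS M Q) (rS Q) (RS M Q') (rS Q') t) => //; rewrite ?RS_ge0 //; lra.
case: (leP (RS M Q) (2 * rS Q)) => hQ; first exact: key.
have uP1 := fpi_uniq uM sM k2 kn F.
have hP1 := fpi_rS uM sM k2 kn F.
apply: le_trans (key P1 uP1 sz1 sub1 hP1) _.
rewrite ler_pM2l; last lra.
have rP1 : 0 < rS P1 by apply: rS_gt0; rewrite ?sz1.
have rQp : 0 < rS Q by apply: rS_gt0; rewrite ?sQ.
rewrite /GR; apply: (@le_trans _ _ 2).
  by rewrite ler_pdivrMr // mulrC.
by rewrite ler_pdivlMr // ltW.
Qed.
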